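(* Let $G$ be a prime tournament and $u\in V(G)$. Let $H_1,H_2$ be prime subtournaments of $G$ such that $V(H_1)\cup V(H_2)=V(G)\setminus\{u\}$, the subtournaments $H_1+u$ and $H_2+u$ are decomposable, and the subtournament $H_{1,2}$ induced on $V(H_1)\cap V(H_2)$ is prime with $|V(H_{1,2})|\ge 3$. Then either $u\in V_x(H_1)$ for some $x\in V(H_1)\setminus V(H_2)$, or $u\in V_y(H_2)$ for some $y\in V(H_2)\setminus V(H_1)$.
   Context: A tournament is a finite, non-null, loopless directed graph in which for any two distinct vertices $u,v$ there is exactly one edge with both ends in $\{u,v\}$. A subtournament is the tournament induced on a nonempty vertex subset; for a subtournament $H$ of $G$ and $v\in V(G)$, $H+v$ is the subtournament induced on $V(H)\cup\{v\}$. A homogeneous set of a tournament $G$ is a set $X\subseteq V(G)$ such that each vertex outside $X$ either has edges to all of $X$ or edges from all of $X$; it is nontrivial if $1<|X|<|V(G)|$. A tournament is prime if it has no nontrivial homogeneous set, and decomposable otherwise. For a subtournament $H$ of $G$ and $x\in V(H)$, $V_x(H)$ is the set of vertices $v\in V(G)\setminus V(H)$ such that $\{v,x\}$ is a homogeneous set of $H+v$. *)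

(* Defs.v *)
From mathcomp Require Import all_boot.
Set Implicit Arguments. Unset Strict Implicit. Unset Printing Implicit Defensive.

Definition is_tournament (T : finType) (adj : rel T) : Prop :=
  (forall x, ~~ adj x x) /\
  (forall x y, x != y -> (adj x y (+) adj y x)).

(* Subtournaments are identified with their (nonempty) vertex sets S.
   X is a homogeneous set of the subtournament induced on S. *)
Definition homogeneous (T : finType) (adj : rel T) (S X : {set T}) : bool :=
  (X \subset S) &&
  [forall v in S :\: X,
     [forall x in X, adj v x] || [forall x in X, adj x v]].

Definition nontrivial (T : finType) (S X : {set T}) : bool :=
  (1 < #|X|) && (#|X| < #|S|).

Definition prime_tour (T : finType) (adj : rel T) (S : {set T}) : bool :=
  [forall X : {set T}, ~~ (homogeneous adj S X && nontrivial S X)].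

Definition decomposable (T : finType) (adj : rel T) (S : {set T}) : bool :=
  ~~ prime_tour adj S.

Definition Vx (T : finType) (adj : rel T) (S : {set T}) (x : T) : {set T} :=
  [set v in ~: S | homogeneous adj (v |: S) [set v; x]].

(* Main.v *)
Require Import Defs.
From mathcomp Require Import all_boot.
Set Implicit Arguments. Unset Strict Implicit.

Lemma homE (T : finType) (adj : rel T) (A X : {set T}) w :
  homogeneous adj A X -> w \in A -> w \notin X ->
  (forall x, x \in X -> adj w x) \/ (forall x, x \in X -> adj x w).
Proof.
move=> /andP[_ /forallP H] wA wX.
have := H w; rewrite inE wX wA /= => /orP[/forallP H1|/forallP H2].
  by left=> x xX; have := H1 x; rewrite xX.
by right=> x xX; have := H2 x; rewrite xX.
Qed.

Lemma homI (T : finType) (adj : rel T) (A X : {set T}) :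
  X \subset A ->
  (forall w, w \in A -> w \notin X ->
    (forall x, x \in X -> adj w x) \/ (forall x, x \in X -> adj x w)) ->
  homogeneous adj A X.
Proof.
move=> sXA H; rewrite /homogeneous sXA /=; apply/forallP=> w; apply/implyP.
rewrite inE => /andP[wX wA]; case: (H w wA wX) => [H1|H2].
  by apply/orP; left; apply/forallP=> x; apply/implyP; apply: H1.
by apply/orP; right; apply/forallP=> x; apply/implyP; apply: H2.
Qed.

Lemma prime_contra (T : finType) (adj : rel T) (S X : {set T}) :
  prime_tour adj S -> homogeneous adj S X -> 1 < #|X| -> #|X| < #|S| -> False.
Proof.
move=> /forallP /(_ X); rewrite /nontrivial => /negP H hX h1 h2.
by apply: H; rewrite hX h1 h2.
Qed.

Lemma asym (T : finType) (adj : rel T) a b :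
  is_tournament adj -> adj a b -> adj b a -> False.
Proof.
move=> [irr tot] ab ba; case: (eqVneq a b) => [eab|nab].
  by subst; move: (irr b); rewrite ab.
by move: (tot a b nab); rewrite ab ba.
Qed.

Lemma hom_restr (T : finType) (adj : rel T) (A B X : {set T}) :
  homogeneous adj A X -> X \subset B -> B \subset A -> homogeneous adj B X.
Proof.
move=> hA sXB sBA; apply: homI => // w wB wX.
exact: (homE hA (subsetP sBA w wB) wX).
Qed.

Lemma classify (T : finType) (adj : rel T) (S : {set T}) v :
  prime_tour adj S -> v \notin S -> decomposable adj (v |: S) ->
  (exists2 x, x \in S & homogeneous adj (v |: S) [set v; x]) \/
  homogeneous adj (v |: S) S.
Proof.
move=> pS vS; rewrite /decomposable /prime_tour negb_forall => /existsP[X].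
rewrite negbK => /andP[hX /andP[c1 c2]].
have sX : X \subset v |: S by case/andP: hX.
have cU : #|v |: S| = #|S|.+1 by rewrite cardsU1 vS.
case: (boolP (v \in X)) => vX.
  have hY : homogeneous adj S (X :\ v).
    apply: homI.
      apply/subsetP=> z; rewrite !inE => /andP[zv zX].
      by move: (subsetP sX z zX); rewrite !inE (negbTE zv).
    move=> w wS wY.
    have wv : w != v by apply: contraNneq vS => <-.
    have wX : w \notin X by move: wY; rewrite !inE wv.
    have [H1|H2] := homE hX (setU1r v wS) wX.
      by left=> x; rewrite inE => /andP[_]; apply: H1.
    by right=> x; rewrite inE => /andP[_]; apply: H2.
  have cY : #|X| = (#|X :\ v|).+1 by rewrite (cardsD1 v X) vX.
  have : #|X :\ v| == 1.
    rewrite eqn_leq; apply/andP; split; last by rewrite -ltnS -cY.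
    rewrite leqNgt; apply/negP=> h; apply: (prime_contra pS hY) => //.
    by rewrite -ltnS -cY -cU.
  case/cards1P=> x ex; left; exists x.
    have : x \in X :\ v by rewrite ex set11.
    rewrite !inE => /andP[xv xX]; move: (subsetP sX x xX).
    by rewrite !inE (negbTE xv).
  by have -> : [set v; x] = X by rewrite -ex setD1K.
right.
have sXS : X \subset S.
  apply/subsetP=> z zX; move: (subsetP sX z zX); rewrite !inE.
  by case/orP=> // /eqP ezv; move: vX; rewrite -ezv zX.
have hXS : homogeneous adj S X by apply: hom_restr hX sXS (subsetUr _ _).
have eXS : X = S.
  apply/eqP; rewrite eqEcard sXS /= leqNgt; apply/negP => h.
  exact: (prime_contra pS hXS c1 h).
by rewrite -{2}eXS.
Qed.

Lemma pairE (T : finType) (adj : rel T) (A : {set T}) v x w :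
  homogeneous adj A [set v; x] -> w \in A -> w != v -> w != x ->
  (adj w v /\ adj w x) \/ (adj v w /\ adj x w).
Proof.
move=> h wA wv wx.
have wX : w \notin [set v; x] by rewrite !inE negb_or wv wx.
case: (homE h wA wX) => H.
  by left; split; apply: H; rewrite !inE eqxx ?orbT.
by right; split; apply: H; rewrite !inE eqxx ?orbT.
Qed.

Lemma L3a (T : finType) (adj : rel T) (S : {set T}) v x y :
  is_tournament adj -> prime_tour adj S -> 3 <= #|S| -> v \notin S ->
  x \in S -> y \in S ->
  homogeneous adj (v |: S) [set v; x] -> homogeneous adj (v |: S) [set v; y] ->
  x = y.
Proof.
move=> tT pS cS vS xS yS hx hy; apply/eqP; apply/negPn/negP => nxy.
apply: (prime_contra pS (X := [set x; y])); last by rewrite cards2 nxy.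
- apply: homI.
    by apply/subsetP=> z; rewrite !inE => /orP[]/eqP->.
  move=> w wS; rewrite !inE negb_or => /andP[wx wy].
  have wv : w != v by apply: contraNneq vS => <-.
  have [[a1 a2]|[a1 a2]] := pairE hx (setU1r v wS) wv wx;
  have [[b1 b2]|[b1 b2]] := pairE hy (setU1r v wS) wv wy.
  + by left=> z; rewrite !inE => /orP[]/eqP->.
  + by case: (asym tT a1 b1).
  + by case: (asym tT a1 b1).
  + by right=> z; rewrite !inE => /orP[]/eqP->.
- by rewrite cards2 nxy.
Qed.

Lemma L3b (T : finType) (adj : rel T) (S : {set T}) v x :
  is_tournament adj -> prime_tour adj S -> 3 <= #|S| -> v \notin S ->
  x \in S -> homogeneous adj (v |: S) [set v; x] ->
  (forall w, w \in S -> adj v w) \/ (forall w, w \in S -> adj w v) -> False.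
Proof.
move=> tT pS cS vS xS hx Hd.
have cD : #|S| = (#|S :\ x|).+1 by rewrite (cardsD1 x S) xS.
apply: (prime_contra pS (X := S :\ x)); last by rewrite cD.
- apply: homI; first exact: subsetDl.
  move=> w wS; rewrite !inE wS andbT negbK => /eqP -> {w wS}.
  case: Hd => Hd; [left|right] => z; rewrite !inE => /andP[zx zS];
  have zv : z != v by apply: contraNneq vS => <-.
  + have [[a1 a2]|[a1 a2]] := pairE hx (setU1r v zS) zv zx => //.
    by case: (asym tT (Hd z zS) a1).
  + have [[a1 a2]|[a1 a2]] := pairE hx (setU1r v zS) zv zx => //.
    by case: (asym tT (Hd z zS) a1).
- by rewrite -ltnS -cD.
Qed.

Theorem proposition3p6 (T : finType) (adj : rel T) (u : T) (H1 H2 : {set T}) :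
  is_tournament adj ->
  prime_tour adj [set: T] ->
  H1 != set0 -> H2 != set0 ->
  prime_tour adj H1 -> prime_tour adj H2 ->
  H1 :|: H2 = [set: T] :\ u ->
  decomposable adj (u |: H1) -> decomposable adj (u |: H2) ->
  prime_tour adj (H1 :&: H2) -> 3 <= #|H1 :&: H2| ->
  (exists2 x, x \in H1 :\: H2 & u \in Vx adj H1 x) \/
  (exists2 y, y \in H2 :\: H1 & u \in Vx adj H2 y).
Proof.
move=> tT pG _ _ p1 p2 eU d1 d2 p12 c12.
have uU : u \notin H1 :|: H2 by rewrite eU !inE eqxx.
have u1 : u \notin H1 by move: uU; rewrite inE negb_or => /andP[].
have u2 : u \notin H2 by move: uU; rewrite inE negb_or => /andP[].
have u12 : u \notin H1 :&: H2 by rewrite inE (negbTE u1).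
have s1 : u |: (H1 :&: H2) \subset u |: H1 by apply: setUS; apply: subsetIl.
have s2 : u |: (H1 :&: H2) \subset u |: H2 by apply: setUS; apply: subsetIr.
have pr1 : forall (H : {set T}) x, x \in H1 :&: H2 -> u |: (H1 :&: H2) \subset u |: H ->
    homogeneous adj (u |: H) [set u; x] -> homogeneous adj (u |: (H1 :&: H2)) [set u; x].
  move=> H x x12 sH h; apply: hom_restr h _ sH.
  by apply/subsetP=> z /set2P[]->; [exact: setU11|exact: setU1r].
have dir : forall H : {set T}, u \notin H -> homogeneous adj (u |: H) H ->
    (forall w, w \in H -> adj u w) \/ (forall w, w \in H -> adj w u).
  move=> H uH h; apply: (homE h) => //; exact: setU11.
have dirr : forall H : {set T}, H1 :&: H2 \subset H ->
    (forall w, w \in H -> adj u w) \/ (forall w, w \in H -> adj w u) ->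
    (forall w, w \in H1 :&: H2 -> adj u w) \/ (forall w, w \in H1 :&: H2 -> adj w u).
  move=> H sH [] Hd; [left|right] => w w12; apply: Hd; exact: (subsetP sH w w12).
have cT : 4 <= #|T|.
  apply: leq_trans (max_card (mem (u |: (H1 :&: H2)))).
  by rewrite cardsU1 u12.
have [w0 w0in] : exists w0, w0 \in H1 :&: H2.
  by apply/set0Pn; rewrite -card_gt0; apply: leq_trans c12.
have w01 : w0 \in H1 by move: w0in; rewrite inE => /andP[].
have w02 : w0 \in H2 by move: w0in; rewrite inE => /andP[].
have [[x x1 hx]|h1] := classify p1 u1 d1;
have [[y y2 hy]|h2] := classify p2 u2 d2.
- case: (boolP (x \in H2)) => x2; last first.
    by left; exists x; rewrite !inE ?x1 ?x2 ?(negbTE u1) ?hx.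
  case: (boolP (y \in H1)) => y1; last first.
    by right; exists y; rewrite !inE ?y2 ?y1 ?(negbTE u2) ?hy.
  have x12 : x \in H1 :&: H2 by rewrite inE x1 x2.
  have y12 : y \in H1 :&: H2 by rewrite inE y1 y2.
  have exy := L3a tT p12 c12 u12 x12 y12 (pr1 _ _ x12 s1 hx) (pr1 _ _ y12 s2 hy).
  subst y; exfalso.
  have xu : x != u by apply: contraNneq u1 => <-.
  apply: (prime_contra pG (X := [set u; x])); last by rewrite cards2 eq_sym xu cardsT (leq_trans _ cT).
  + apply: homI; first exact: subsetT.
    move=> w _; rewrite !inE negb_or => /andP[wu wx].
    have : w \in H1 :|: H2 by rewrite eU !inE wu.
    rewrite inE => /orP[] wH.
    * have [[a b]|[a b]] := pairE hx (setU1r u wH) wu wx;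
      [left|right] => z /set2P[]-> //.
    * have [[a b]|[a b]] := pairE hy (setU1r u wH) wu wx;
      [left|right] => z /set2P[]-> //.
  + by rewrite cards2 eq_sym xu.
- case: (boolP (x \in H2)) => x2; last first.
    by left; exists x; rewrite !inE ?x1 ?x2 ?(negbTE u1) ?hx.
  have x12 : x \in H1 :&: H2 by rewrite inE x1 x2.
  exfalso; apply: (L3b tT p12 c12 u12 x12 (pr1 _ _ x12 s1 hx)).
  by apply: dirr (dir _ u2 h2); apply: subsetIr.
- case: (boolP (y \in H1)) => y1; last first.
    by right; exists y; rewrite !inE ?y2 ?y1 ?(negbTE u2) ?hy.
  have y12 : y \in H1 :&: H2 by rewrite inE y1 y2.
  exfalso; apply: (L3b tT p12 c12 u12 y12 (pr1 _ _ y12 s2 hy)).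
  by apply: dirr (dir _ u1 h1); apply: subsetIl.
- exfalso.
  have hall : forall H : {set T}, H1 :|: H2 = H -> 
      (forall w, w \in H -> adj u w) \/ (forall w, w \in H -> adj w u) ->
      homogeneous adj [set: T] ([set: T] :\ u).
    move=> H eH Hd; apply: homI; first exact: subsetT.
    move=> w _; rewrite !inE andbT negbK => /eqP -> {w}.
    by rewrite -eU eH.
  have cTu : #|T| = (#|[set: T] :\ u|).+1 by rewrite -cardsT (cardsD1 u [set: T]) inE.
  have hU : homogeneous adj [set: T] ([set: T] :\ u).
    have [Ha|Ha] := dir _ u1 h1; have [Hb|Hb] := dir _ u2 h2.
    + apply: (hall _ erefl); left=> w; rewrite inE => /orP[]; [exact: Ha|exact: Hb].
    + by case: (asym tT (Ha w0 w01) (Hb w0 w02)).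
    + by case: (asym tT (Hb w0 w02) (Ha w0 w01)).
    + apply: (hall _ erefl); right=> w; rewrite inE => /orP[]; [exact: Ha|exact: Hb].
  apply: (prime_contra pG hU).
    by rewrite -ltnS -cTu; apply: leq_trans cT.
  by rewrite cardsT cTu.
Qed.
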